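(* Let $PS$ be a finite set of propositional symbols and let $W = \{\langle \phi_1, k_1\rangle, \ldots, \langle \phi_n, k_n\rangle\}$ be a weighted base over $PS$. Let ${\it holds}_1, \ldots, {\it holds}_n$ be pairwise distinct symbols of $PS \setminus Var(W)$. Define $H = \{\langle \phi_i, +\infty\rangle \mid \langle \phi_i, +\infty\rangle \in W\}$ and $S = \{\langle {\it holds}_i \Rightarrow \phi_i, +\infty\rangle, \langle {\it holds}_i, k_i\rangle \mid \langle \phi_i, k_i\rangle \in W,\ k_i \neq +\infty\}$, and let $W{\downarrow} = H \cup S$. Then $W{\downarrow}$ is a weighted base in normal form. Moreover, $K_W(\alpha) = K_{W{\downarrow}}(\alpha)$ for every formula $\alpha \in PROP_{Var(W)}$, and hence $W{\downarrow}$ is $Var(W)$-equivalent to $W$.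
   Context: $PROP_{V}$ denotes the propositional formulas built from symbols in $V$, the constants $true,false$ and $\neg,\wedge,\vee$; $Var(\phi)$ is the set of symbols occurring in $\phi$. Worlds are the interpretations $\omega \in \Omega = 2^{PS}$. A weighted base is a finite set $W=\{\langle \phi_1,k_1\rangle,\ldots,\langle\phi_n,k_n\rangle\}$ where each $\phi_i\in PROP_{PS}$ and each weight $k_i$ is a positive integer or $+\infty$; $Var(W)=\bigcup_i Var(\phi_i)$. The weight of a world is $K_W(\omega)=\sum_{\langle\phi_i,k_i\rangle\in W,\ \omega\models\neg\phi_i} k_i$, and for a formula $\alpha$, $K_W(\alpha)=\min_{\omega\models\alpha}K_W(\omega)$. Skeptical inference: $\alpha \mid\!\sim_W \beta$ iff every world of minimal $K_W$-weight among the models of $\alpha$ is a model of $\beta$. $W$ is in normal form iff for every $i$, either $k_i=+\infty$ or $\phi_i$ is a propositional symbol. For $V\subseteq PS$, two weighted bases $W_1,W_2$ are $V$-equivalent iff for all $\alpha,\beta\in PROP_V$, $\alpha\mid\!\sim_{W_1}\beta$ holds exactly when $\alpha\mid\!\sim_{W_2}\beta$ holds. *)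

(* Defs.v *)
From Stdlib Require List.
From mathcomp Require Import all_boot.
Set Implicit Arguments. Unset Strict Implicit. Unset Printing Implicit Defensive.

Inductive xnat := XFin of nat | XInf.

Definition xadd (a b : xnat) : xnat :=
  match a, b with XFin m, XFin n => XFin (m + n) | _, _ => XInf end.
Definition xleb (a b : xnat) : bool :=
  match a, b with
  | _, XInf => true | XInf, XFin _ => false | XFin m, XFin n => (m <= n)%N end.
Definition xmin (a b : xnat) : xnat := if xleb a b then a else b.

Inductive form (PS : Type) :=
| FVar of PS | FTrue | FFalse
| FNot of form PS | FAnd of form PS & form PS | FOr of form PS & form PS.
Arguments FTrue {PS}. Arguments FFalse {PS}.

Definition FImp (PS : Type) (a b : form PS) : form PS := FOr (FNot a) b.

Fixpoint fvars (PS : Type) (f : form PS) : seq PS :=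
  match f with
  | FVar v => [:: v] | FTrue | FFalse => [::]
  | FNot g => fvars g
  | FAnd g h | FOr g h => fvars g ++ fvars h
  end.

Definition world (PS : finType) := {ffun PS -> bool}.

Fixpoint sat (PS : finType) (w : world PS) (f : form PS) : bool :=
  match f with
  | FVar v => w v | FTrue => true | FFalse => false
  | FNot g => ~~ sat w g
  | FAnd g h => sat w g && sat w h
  | FOr g h => sat w g || sat w h
  end.

Definition wbase (PS : Type) := seq (form PS * xnat).

Definition is_wbase (PS : Type) (W : wbase PS) : Prop :=
  forall p, List.In p W -> match p.2 with XFin k => (0 < k)%N | XInf => true end.

Definition varsW (PS : Type) (W : wbase PS) : seq PS := flatten [seq fvars p.1 | p <- W].

Definition in_prop (PS : eqType) (V : pred PS) (f : form PS) : Prop :=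
  forall v, v \in fvars f -> V v.

Definition Kw (PS : finType) (W : wbase PS) (w : world PS) : xnat :=
  foldr (fun p acc => if sat w p.1 then acc else xadd p.2 acc) (XFin 0) W.

Definition Kf (PS : finType) (W : wbase PS) (a : form PS) : xnat :=
  foldr xmin XInf [seq Kw W w | w <- enum {: world PS} & sat w a].

Definition infer (PS : finType) (W : wbase PS) (a b : form PS) : Prop :=
  forall w : world PS, sat w a -> Kw W w = Kf W a -> sat w b.

Definition normal_form (PS : Type) (W : wbase PS) : Prop :=
  forall p, List.In p W -> p.2 = XInf \/ exists v, p.1 = FVar v.

Definition V_equiv (PS : finType) (V : pred PS) (W1 W2 : wbase PS) : Prop :=
  forall a b : form PS, in_prop V a -> in_prop V b -> (infer W1 a b <-> infer W2 a b).

(* W-down = H u S, where holds i is the fresh symbol for the i-th element of W. *)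
Definition downW (PS : Type) (W : wbase PS) (holds : 'I_(size W) -> PS) : wbase PS :=
  [seq (p.1, XInf) | p <- W & if p.2 is XInf then true else false]
  ++ flatten [seq (let p := nth (FTrue, XInf) W i in
                   match p.2 with
                   | XInf => [::]
                   | XFin k => [:: (FImp (FVar (holds i)) p.1, XInf); (FVar (holds i), XFin k)]
                   end) | i : 'I_(size W) <- enum 'I_(size W)].
Arguments downW {PS} W holds.

(* Main.v *)
Require Import Defs.
From HB Require Import structures.
From mathcomp Require Import all_boot.

Set Implicit Arguments. Unset Strict Implicit. Unset Printing Implicit Defensive.

Lemma xaddA : associative xadd.
Proof. by case=> [a|] [b|] [c|] //=; rewrite addnA. Qed.
Lemma xaddC : commutative xadd.
Proof. by case=> [a|] [b|] //=; rewrite addnC. Qed.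
Lemma xadd0n : left_id (XFin 0) xadd.
Proof. by case. Qed.

HB.instance Definition _ := Monoid.isComLaw.Build xnat (XFin 0) xadd xaddA xaddC xadd0n.

Lemma xleb_refl a : xleb a a.
Proof. by case: a => //= a; exact: leqnn. Qed.
Lemma xleb_trans a b c : xleb a b -> xleb b c -> xleb a c.
Proof. by case: a => [a|]; case: b => [b|]; case: c => [c|] //=; apply: leq_trans. Qed.
Lemma xleb_anti a b : xleb a b -> xleb b a -> a = b.
Proof. by case: a => [a|]; case: b => [b|] //= h1 h2; congr XFin; apply/eqP; rewrite eqn_leq h1 h2. Qed.
Lemma xleb_total a b : xleb a b || xleb b a.
Proof. by case: a => [a|]; case: b => [b|] //=; apply: leq_total. Qed.
Lemma xleb_add a b c d : xleb a b -> xleb c d -> xleb (xadd a c) (xadd b d).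
Proof. by case: a => [a|]; case: b => [b|]; case: c => [c|]; case: d => [d|] //=; apply: leq_add. Qed.

Lemma fmin_le (T : eqType) (f : T -> xnat) (s : seq T) x :
  x \in s -> xleb (foldr xmin XInf (map f s)) (f x).
Proof.
elim: s => [|y s IH] //=; rewrite inE => /orP [/eqP ->|/IH h]; rewrite /xmin.
  case: ifP => [_|hn]; first exact: xleb_refl.
  by have := xleb_total (f y) (foldr xmin XInf [seq f i | i <- s]); rewrite hn.
case: ifP => [hy|_] //; exact: xleb_trans hy h.
Qed.

Lemma fmin_att (T : eqType) (f : T -> xnat) (s : seq T) :
  foldr xmin XInf (map f s) = XInf \/ exists2 x, x \in s & foldr xmin XInf (map f s) = f x.
Proof.
elim: s => [|y s IH] /=; first by left.
rewrite /xmin; case: ifP => _; first by right; exists y; rewrite ?inE ?eqxx.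
case: IH => [->|[x hx ->]]; [by left | by right; exists x; rewrite // inE hx orbT].
Qed.

Lemma Kf_le (PS : finType) (W : wbase PS) a w : sat w a -> xleb (Kf W a) (Kw W w).
Proof. by move=> h; apply: fmin_le; rewrite mem_filter h mem_enum. Qed.

Lemma Kf_att (PS : finType) (W : wbase PS) a :
  Kf W a = XInf \/ exists2 w, sat w a & Kf W a = Kw W w.
Proof.
rewrite /Kf; case: (fmin_att (Kw W) [seq w <- enum {: world PS} | sat w a]) => [->|[w]]; first by left.
by rewrite mem_filter => /andP [h _] ->; right; exists w.
Qed.

Lemma sat_ext (PS : finType) (w1 w2 : world PS) f :
  (forall v, v \in fvars f -> w1 v = w2 v) -> sat w1 f = sat w2 f.
Proof.
elim: f => [v|||g IH|g IHg h IHh|g IHg h IHh] //= H.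
- by apply: H; rewrite inE.
- by rewrite IH.
- by rewrite IHg ?IHh // => v hv; apply: H; rewrite mem_cat hv ?orbT.
- by rewrite IHg ?IHh // => v hv; apply: H; rewrite mem_cat hv ?orbT.
Qed.

Definition cost (PS : finType) (w : world PS) (p : form PS * xnat) :=
  if sat w p.1 then XFin 0 else p.2.

Lemma Kw_big (PS : finType) (W : wbase PS) w :
  Kw W w = \big[xadd/XFin 0]_(p <- W) cost w p.
Proof.
elim: W => [|p W IH]; first by rewrite big_nil.
by rewrite big_cons -IH /cost /Kw /=; case: ifP => _ //; rewrite xadd0n.
Qed.

Lemma Kw_cat (PS : finType) (A B : wbase PS) w : Kw (A ++ B) w = xadd (Kw A w) (Kw B w).
Proof. by rewrite !Kw_big big_cat. Qed.

Lemma Kw_flatten (PS : finType) (L : seq (wbase PS)) w :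
  Kw (flatten L) w = \big[xadd/XFin 0]_(l <- L) Kw l w.
Proof.
elim: L => [|l L IH]; first by rewrite big_nil.
by rewrite big_cons /= Kw_cat IH.
Qed.

Definition Dc (PS : finType) (W : wbase PS) (holds : 'I_(size W) -> PS) w (i : 'I_(size W)) :=
  match nth (FTrue, XInf) W i with
  | (phi, XInf) => cost w (phi, XInf)
  | (phi, XFin k) => xadd (cost w (FImp (FVar (holds i)) phi, XInf)) (cost w (FVar (holds i), XFin k))
  end.

Lemma KwW_ord (PS : finType) (W : wbase PS) w :
  Kw W w = \big[xadd/XFin 0]_(i < size W) cost w (nth (FTrue, XInf) W i).
Proof. by rewrite Kw_big (big_nth (FTrue, XInf)) big_mkord. Qed.

Lemma Kw_down (PS : finType) (W : wbase PS) (holds : 'I_(size W) -> PS) w :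
  Kw (downW W holds) w = \big[xadd/XFin 0]_(i < size W) Dc holds w i.
Proof.
rewrite /downW Kw_cat Kw_flatten big_map big_enum /= Kw_big big_map big_filter big_mkcond.
rewrite (big_nth (FTrue, XInf)) big_mkord -big_split; apply: eq_bigr => i _.
rewrite /Dc; case: (nth _ W i) => phi [k|] /=; last by rewrite xaddC xadd0n.
by rewrite /cost /=; case: (w (holds i)); case: (sat w phi) => /=; rewrite ?addn0.
Qed.

Lemma L1 (PS : finType) (W : wbase PS) (holds : 'I_(size W) -> PS) w :
  xleb (Kw W w) (Kw (downW W holds) w).
Proof.
rewrite KwW_ord Kw_down; apply: (big_ind2 (fun a b => xleb a b)) => [|? ? ? ?|i _].
- exact: xleb_refl.
- exact: xleb_add.
rewrite /Dc; case: (nth _ W i) => phi [k|] /=; last exact: xleb_refl.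
by rewrite /cost /=; case: (w (holds i)); case: (sat w phi) => /=; rewrite ?addn0.
Qed.

Definition extw (PS : finType) (W : wbase PS) (holds : 'I_(size W) -> PS) (w : world PS) : world PS :=
  [ffun v => if [pick i | holds i == v] is Some i then sat w (nth (FTrue, XInf) W i).1 else w v].

Lemma extw_holds (PS : finType) (W : wbase PS) (holds : 'I_(size W) -> PS) w i :
  injective holds -> extw holds w (holds i) = sat w (nth (FTrue, XInf) W i).1.
Proof.
move=> inj; rewrite ffunE; case: pickP => [j /eqP /inj -> //|/(_ i)].
by rewrite eqxx.
Qed.

Lemma extw_V (PS : finType) (W : wbase PS) (holds : 'I_(size W) -> PS) w v :
  (forall i, holds i \notin varsW W) -> v \in varsW W -> extw holds w v = w v.
Proof.
move=> Hn Hv; rewrite ffunE; case: pickP => [j /eqP hj|//].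
by have := Hn j; rewrite hj Hv.
Qed.

Lemma nth_vars (PS : eqType) (W : wbase PS) i v :
  i < size W -> v \in fvars (nth (FTrue, XInf) W i).1 -> v \in varsW W.
Proof.
elim: W i => [|p W IH] [|i] //= hi hv; rewrite /varsW /= mem_cat ?hv //.
by apply/orP; right; apply: (IH i).
Qed.

Lemma L2 (PS : finType) (W : wbase PS) (holds : 'I_(size W) -> PS) w :
  injective holds -> (forall i, holds i \notin varsW W) ->
  Kw (downW W holds) (extw holds w) = Kw W w.
Proof.
move=> inj Hn; rewrite Kw_down KwW_ord; apply: eq_bigr => i _.
have hs : sat (extw holds w) (nth (FTrue, XInf) W i).1 = sat w (nth (FTrue, XInf) W i).1.
  apply: sat_ext => v hv; apply: extw_V => //; exact: nth_vars (ltn_ord i) hv.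
have hh := extw_holds w i inj.
rewrite /Dc; case E: (nth _ W i) hs hh => [phi [k|]] /= hs hh; rewrite /cost /= hs ?hh //.
by case: (sat w phi) => /=; rewrite ?addn0.
Qed.

Lemma In_map (A B : Type) (f : A -> B) (s : seq A) y :
  List.In y (map f s) -> exists x, List.In x s /\ y = f x.
Proof.
elim: s => [|x s IH] //= [<-|/IH [z [hz ->]]]; first by exists x; split; [left|].
by exists z; split; [right|].
Qed.

Lemma In_filter (A : Type) (P : pred A) (s : seq A) x :
  List.In x (filter P s) -> List.In x s.
Proof. elim: s => [|y s IH] //=; case: (P y) => /= [[->|/IH]|/IH]; auto. Qed.

Lemma In_flatten (A : Type) (L : seq (seq A)) y :
  List.In y (flatten L) -> exists l, List.In l L /\ List.In y l.
Proof.
elim: L => [|l L IH] //= /List.in_app_iff [h|/IH [l' [h1 h2]]].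
  by exists l; split; [left|].
by exists l'; split; [right|].
Qed.

Lemma In_nth (A : Type) (d : A) (s : seq A) i : i < size s -> List.In (nth d s i) s.
Proof. elim: s i => [|x s IH] [|i] //= hi; [left | right; apply: IH] => //. Qed.

Lemma down_elems (PS : finType) (W : wbase PS) (holds : 'I_(size W) -> PS) p :
  is_wbase W -> List.In p (downW W holds) ->
  p.2 = XInf \/ exists v k, p = (FVar v, XFin k) /\ 0 < k.
Proof.
move=> hW /List.in_app_iff [h|h].
  by have [q [_ ->]] := In_map h; left.
have [l [hl1 hl]] := In_flatten h.
have [i [_ Ei]] := In_map hl1; subst l.
have := hW (nth (FTrue, XInf) W i) (@In_nth _ (FTrue, XInf) W i (ltn_ord i)).
move: hl; case: (nth (FTrue, XInf) W i) => phi [k|] //= [<-|[<-|//]] hk; first by left.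
by right; exists (holds i), k.
Qed.

Lemma xleb_inf a : xleb a XInf.
Proof. by case: a. Qed.

Theorem proposition3p1 (PS : finType) (W : wbase PS) (holds : 'I_(size W) -> PS) :
  is_wbase W ->
  injective holds ->
  (forall i, holds i \notin varsW W) ->
  [/\ is_wbase (downW W holds),
      normal_form (downW W holds),
      (forall a : form PS, in_prop (fun v => v \in varsW W) a ->
         Kf W a = Kf (downW W holds) a)
    & V_equiv (fun v => v \in varsW W) W (downW W holds)].
Proof.
move=> hW inj Hn.
have satE : forall a w, in_prop (fun v => v \in varsW W) a -> sat (extw holds w) a = sat w a.
  by move=> a w ha; apply: sat_ext => v hv; apply: extw_V => //; apply: ha.
have KfE : forall a : form PS, in_prop (fun v => v \in varsW W) a ->
         Kf W a = Kf (downW W holds) a.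
  move=> a ha; apply: xleb_anti.
    case: (Kf_att (downW W holds) a) => [->|[w hw ->]]; first exact: xleb_inf.
    exact: xleb_trans (Kf_le W hw) (L1 holds w).
  case: (Kf_att W a) => [->|[w hw ->]]; first exact: xleb_inf.
  rewrite -(L2 w inj Hn); apply: Kf_le; by rewrite satE.
split => //.
- move=> p /(down_elems hW) [->|[v [k [-> hk]]]] //.
- by move=> p /(down_elems hW) [->|[v [k [-> _]]]]; [left|right; exists v].
move=> a b ha hb; split => hinf w hwa hK.
  apply: hinf => //; apply: xleb_anti; last exact: Kf_le.
  by rewrite KfE // -hK; exact: L1.
rewrite -(satE b w hb); apply: hinf; first by rewrite satE.
by rewrite (L2 w inj Hn) hK KfE.
Qed.
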